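(* In the setting below, let $\varpi:=F^{j(\theta)}-j(F^\theta)$, where $F^{j(\theta)}=\mathrm d(j\circ\theta)-\tfrac12[j\theta,j\theta]_{\widehat L}\in\Gamma(\wedge^2A^*\otimes\widehat L)$. Then $\varpi$ is scalar valued, $\varpi\in\Gamma(\wedge^2A^* )$, and $$\varpi=\langle\mathrm dj,\theta\rangle+\tfrac12\sigma(\theta,\theta)=\langle\mathrm d^\theta j,\theta\rangle-\tfrac12\sigma(\theta,\theta).$$ Its differential $\mathrm d\varpi$ is basic, so $\mathrm d\varpi=\mathsf a^*\eta$ for a unique closed 3-form $\eta\in\Omega^3(N)$, and $$\mathsf a^*\eta=-\langle\mathrm d^\theta j,F^\theta\rangle.$$ Finally, $\iota_\xi\varpi=-\langle\mathrm dj,\xi\rangle$ for all $\xi\in\Gamma(L)$.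
   Context: Let $A\to N$ be a transitive Lie algebroid: a vector bundle with a Lie bracket $[\cdot,\cdot]_A$ on $\Gamma(A)$ and a surjective anchor $\mathsf a\colon A\to TN$ with $[\xi_1,f\xi_2]_A=f[\xi_1,\xi_2]_A+(\mathsf a(\xi_1)f)\xi_2$; $L=\ker\mathsf a$ is a Lie algebra bundle with bracket $[\cdot,\cdot]_L$ the restriction of $[\cdot,\cdot]_A$. An $A$-representation on $\mathcal V\to N$ is a $C^\infty(N)$-linear Lie algebra homomorphism $\xi\mapsto\nabla_\xi\in\mathrm{End}(\Gamma(\mathcal V))$ with $\nabla_\xi(fs)=f\nabla_\xi s+(\mathsf a(\xi)f)s$; duals and tensor products are defined as usual, $N\times\mathbb R$ carries the trivial representation $\nabla_\xi f=\mathsf a(\xi)f$ and $L$ the representation $\nabla_\xi\zeta=[\xi,\zeta]_A$. On $\Gamma(\wedge^kA^*\otimes\mathcal V)$ the differential is $(\mathrm d\phi)(\xi_0,\dots,\xi_k)=\sum_i(-1)^i\nabla_{\xi_i}(\phi(\dots,\widehat{\xi_i},\dots))+\sum_{i<j}(-1)^{i+j}\phi([\xi_i,\xi_j]_A,\dots,\widehat{\xi_i},\dots,\widehat{\xi_j},\dots)$, $\mathcal L_\xi=\iota_\xi\mathrm d+\mathrm d\iota_\xi$; a form is horizontal if its contractions with all sections of $L$ vanish, basic if moreover its Lie derivatives along sections of $L$ vanish. The dual of the anchor gives an injection $\mathsf a^*\colon\Omega(N)\to\Gamma(\wedge A^* )$. A connection is a bundle map $\theta\colon A\to L$ with $\theta|_L=\mathrm{id}$;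 $\mathrm d^\theta\phi$ is $\mathrm d\phi$ evaluated on horizontal components $\xi_i-\theta(\xi_i)$; the curvature is $F^\theta=\mathrm d\theta-\tfrac12[\theta,\theta]_L$, where $\tfrac12[\theta,\theta]_L(\xi,\zeta)=[\theta\xi,\theta\zeta]_L$ (analogously for $[j\theta,j\theta]_{\widehat L}$). Let $0\to N\times\mathbb R\to\widehat L\xrightarrow{p}L\to0$ be a central extension of Lie algebra bundles, where $\widehat L$ carries an $A$-representation $\widehat\nabla$ by derivations of $[\cdot,\cdot]_{\widehat L}$ such that $p\circ\widehat\nabla_\xi=\nabla_\xi\circ p$, $\widehat\nabla$ restricts to the trivial representation on $N\times\mathbb R$, and $\widehat\nabla_\zeta\hat\xi=[\hat\zeta,\hat\xi]_{\widehat L}$ for $\zeta\in\Gamma(L)$ and any lift $\hat\zeta$ of $\zeta$. A splitting is $j\colon L\to\widehat L$ with $p\circ j=\mathrm{id}$; its cocycle is $\sigma(\xi,\zeta)=j([\xi,\zeta]_L)-[j\xi,j\zeta]_{\widehat L}$. We view $j$ as a section of $L^*\otimes\widehat L$ with induced representation; $\mathrm dj$ and $\mathrm d^\theta j$ take values in $A^*\otimes L^*$. For an $L^*$-valued $k$-form $\mu$ and an $L$-valued $l$-form $\nu$, $\langle\mu,\nu\rangle$ is the scalar $(k+l)$-form obtained by wedge product combined with the pairing $L^*\otimes L\to\mathbb R$; $\sigma(\theta,\theta)(\xi,\zeta)=2\sigma(\theta\xi,\theta\zeta)$. *)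

(* Defs.v *)
(* Algebraic (Lie--Rinehart) model of a transitive Lie algebroid:
   C   = C^oo(N) (commutative R-algebra of functions),
   TX  = Gamma(TN) (vector fields, acting on C by derivations via act, bracket brX),
   GA  = Gamma(A), GL = Gamma(L), Lh = Gamma(\hat L)  (C-modules of sections).
   Forms of any degree are functions  seq T -> V  (only their values on
   sequences of the relevant length matter). *)
From HB Require Import structures.
From mathcomp Require Import all_boot all_order all_algebra.
Set Implicit Arguments. Unset Strict Implicit. Unset Printing Implicit Defensive.
Import Order.TTheory GRing.Theory Num.Theory.
Local Open Scope ring_scope.

Definition drop_at {T : Type} (i : nat) (s : seq T) : seq T :=
  take i s ++ drop i.+1 s.

Definition dform {C : comNzRingType} {T : zmodType} {V : lmodType C}
  (nab : T -> V -> V) (br : T -> T -> T) (phi : seq T -> V) (s : seq T) : V :=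
  \sum_(i < size s) ((-1) ^+ i) *: nab (nth 0 s i) (phi (drop_at i s))
  + \sum_(i < size s) \sum_(j < size s | (i < j)%N)
      ((-1) ^+ (i + j)) *: phi (br (nth 0 s i) (nth 0 s j)
                                 :: drop_at i (drop_at j s)).

Definition contract {T V : Type} (x : T) (phi : seq T -> V) : seq T -> V :=
  fun s => phi (x :: s).

Definition lieD {C : comNzRingType} {T : zmodType} {V : lmodType C}
  (nab : T -> V -> V) (br : T -> T -> T) (x : T) (phi : seq T -> V) : seq T -> V :=
  fun s => contract x (dform nab br phi) s + dform nab br (contract x phi) s.

Definition is_kform {C : comNzRingType} {T : lmodType C} {V : lmodType C}
  (k : nat) (phi : seq T -> V) : Prop :=
  (forall (s1 s2 : seq T) (c : C) (x y : T), (size s1 + size s2).+1 = k ->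
     phi (s1 ++ (c *: x + y) :: s2) = c *: phi (s1 ++ x :: s2) + phi (s1 ++ y :: s2))
  /\ (forall (s1 s2 s3 : seq T) (x : T), (size s1 + size s2 + size s3).+2 = k ->
     phi (s1 ++ x :: s2 ++ x :: s3) = 0).

Definition Clinear {C : comNzRingType} {U V : lmodType C} (f : U -> V) : Prop :=
  forall (c : C) (x y : U), f (c *: x + y) = c *: f x + f y.

Definition lie_alg {R : fieldType} {C : comAlgType R} {V : lmodType C}
  (br : V -> V -> V) : Prop :=
  (forall x y w, br (x + y) w = br x w + br y w)
  /\ (forall (r : R) x y, br ((r%:A : C) *: x) y = (r%:A : C) *: br x y)
  /\ (forall x y, br x y = - br y x)
  /\ (forall x y w, br x (br y w) + br y (br w x) + br w (br x y) = 0).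

Definition der_action {R : fieldType} {C : comAlgType R} {T : lmodType C}
  (act : T -> C -> C) : Prop :=
  (forall X f g, act X (f + g) = act X f + act X g)
  /\ (forall X (r : R) f, act X (r%:A * f) = r%:A * act X f)
  /\ (forall X f g, act X (f * g) = act X f * g + f * act X g)
  /\ (forall (c : C) X Y f, act (c *: X + Y) f = c * act X f + act Y f).

Definition lie_rinehart {R : fieldType} {C : comAlgType R} {T : lmodType C}
  (br : T -> T -> T) (act : T -> C -> C) : Prop :=
  lie_alg br /\ der_action act
  /\ (forall X Y f, act (br X Y) f = act X (act Y f) - act Y (act X f))
  /\ (forall X Y (f : C), br X (f *: Y) = f *: br X Y + act X f *: Y).

Definition is_rep {R : fieldType} {C : comAlgType R} {TX GA V : lmodType C}
  (act : TX -> C -> C) (brA : GA -> GA -> GA) (anc : GA -> TX)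
  (nab : GA -> V -> V) : Prop :=
  (forall (c : C) x y v, nab (c *: x + y) v = c *: nab x v + nab y v)
  /\ (forall x v w, nab x (v + w) = nab x v + nab x w)
  /\ (forall x (f : C) v, nab x (f *: v) = f *: nab x v + act (anc x) f *: v)
  /\ (forall x y v, nab (brA x y) v = nab x (nab y v) - nab y (nab x v)).

Definition setting {R : fieldType} {C : comAlgType R} {TX GA GL Lh : lmodType C}
  (act : TX -> C -> C) (brX : TX -> TX -> TX)
  (brA : GA -> GA -> GA) (anc : GA -> TX)
  (iota : GL -> GA) (brL : GL -> GL -> GL) (nabL : GA -> GL -> GL)
  (brH : Lh -> Lh -> Lh) (p : Lh -> GL) (z : C -> Lh) (nabH : GA -> Lh -> Lh)
  (theta : GA -> GL) (j : GL -> Lh) : Prop :=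
  lie_rinehart brX act
  /\ lie_rinehart brA (fun x => act (anc x))
  /\ Clinear anc
  /\ (forall X, exists x, anc x = X)
  /\ (forall x y, anc (brA x y) = brX (anc x) (anc y))
  /\ Clinear iota /\ injective iota
  /\ (forall x, anc x = 0 <-> exists l, x = iota l)
  /\ (forall l m, iota (brL l m) = brA (iota l) (iota m))
  /\ (forall x l, iota (nabL x l) = brA x (iota l))
  (* central extension 0 -> N x R -> \hat L -> L -> 0 of Lie algebra bundles *)
  /\ lie_alg brH
  /\ (forall (c : C) h k, brH (c *: h) k = c *: brH h k)
  /\ Clinear p /\ (forall l, exists h, p h = l)
  /\ (forall h k, p (brH h k) = brL (p h) (p k))
  /\ Clinear (z : C^o -> Lh) /\ injective z
  /\ (forall h, p h = 0 <-> exists f, h = z f)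
  /\ (forall f h, brH (z f) h = 0)
  /\ is_rep act brA anc nabH
  /\ (forall x h k, nabH x (brH h k) = brH (nabH x h) k + brH h (nabH x k))
  /\ (forall x h, p (nabH x h) = nabL x (p h))
  /\ (forall x f, nabH x (z f) = z (act (anc x) f))
  /\ (forall l hl h, p hl = l -> nabH (iota l) h = brH hl h)
  /\ Clinear theta /\ (forall l, theta (iota l) = l)
  /\ Clinear j /\ (forall l, p (j l) = l).

Section Objects.
Context {R : fieldType} {C : comAlgType R} {TX GA GL Lh : lmodType C}
  (act : TX -> C -> C) (brX : TX -> TX -> TX)
  (brA : GA -> GA -> GA) (anc : GA -> TX)
  (iota : GL -> GA) (brL : GL -> GL -> GL) (nabL : GA -> GL -> GL)
  (brH : Lh -> Lh -> Lh) (p : Lh -> GL) (z : C -> Lh) (nabH : GA -> Lh -> Lh)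
  (theta : GA -> GL) (j : GL -> Lh).

Definition theta1 : seq GA -> GL := fun s => theta (nth 0 s 0).
Definition jtheta1 : seq GA -> Lh := fun s => j (theta (nth 0 s 0)).

Definition Ftheta : seq GA -> GL := fun s =>
  dform nabL brA theta1 s - brL (theta (nth 0 s 0)) (theta (nth 0 s 1)).

Definition Fjtheta : seq GA -> Lh := fun s =>
  dform nabH brA jtheta1 s - brH (j (theta (nth 0 s 0))) (j (theta (nth 0 s 1))).

Definition varpi : seq GA -> Lh := fun s => Fjtheta s - j (Ftheta s).

Definition sigma (l m : GL) : Lh := j (brL l m) - brH (j l) (j m).

Definition dj (x : GA) (l : GL) : Lh := nabH x (j l) - j (nabL x l).
(* d^theta j : dj evaluated on the horizontal component of x *)
Definition dthj (x : GA) (l : GL) : Lh := dj (x - iota (theta x)) l.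

Definition pair11 (mu : GA -> GL -> Lh) (nu : seq GA -> GL) : seq GA -> Lh :=
  fun s => mu (nth 0 s 0) (nu [:: nth 0 s 1]) - mu (nth 0 s 1) (nu [:: nth 0 s 0]).
Definition pair12 (mu : GA -> GL -> Lh) (nu : seq GA -> GL) : seq GA -> Lh :=
  fun s => mu (nth 0 s 0) (nu [:: nth 0 s 1; nth 0 s 2])
         - mu (nth 0 s 1) (nu [:: nth 0 s 0; nth 0 s 2])
         + mu (nth 0 s 2) (nu [:: nth 0 s 0; nth 0 s 1]).

Definition half_sigma_tt : seq GA -> Lh :=
  fun s => sigma (theta (nth 0 s 0)) (theta (nth 0 s 1)).

Definition dA (phi : seq GA -> C^o) : seq GA -> C^o :=
  dform (fun x (f : C^o) => (act (anc x) f : C^o)) brA phi.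
Definition dN (phi : seq TX -> C^o) : seq TX -> C^o :=
  dform (fun X (f : C^o) => (act X f : C^o)) brX phi.
Definition lieA (x : GA) (phi : seq GA -> C^o) : seq GA -> C^o :=
  lieD (fun y (f : C^o) => (act (anc y) f : C^o)) brA x phi.

Definition apull (eta : seq TX -> C^o) : seq GA -> C^o := fun s => eta (map anc s).

End Objects.

(* Main.v *)
Require Import Defs.
From HB Require Import structures.
From mathcomp Require Import all_boot all_order all_algebra.
From mathcomp Require Import ring lra.
From Stdlib Require Import IndefiniteDescription.
Set Implicit Arguments. Unset Strict Implicit. Unset Printing Implicit Defensive.
Import Order.TTheory GRing.Theory Num.Theory.
Local Open Scope ring_scope.

Inductive gexp := GAt of nat | GAdd of gexp & gexp | GOpp of gexp | GZero.

Fixpoint geval (M : zmodType) (env : seq M) (e : gexp) : M :=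
  match e with
  | GAt n => nth 0 env n
  | GAdd a b => geval env a + geval env b
  | GOpp a => - geval env a
  | GZero => 0
  end.

Fixpoint gcoef (e : gexp) (k : nat) : int :=
  match e with
  | GAt n => Posz (k == n)
  | GAdd a b => gcoef a k + gcoef b k
  | GOpp a => - gcoef a k
  | GZero => 0
  end.

Lemma sum_at (M : zmodType) (f : nat -> M) (m n : nat) :
  \sum_(k < m) f k *~ Posz (nat_of_ord k == n)%N = if (n < m)%N then f n else 0.
Proof.
elim: m => [|m IH]; first by rewrite big_ord0.
rewrite big_ord_recr /= IH.
case: (ltngtP n m) => H.
- by rewrite (ltn_trans H (ltnSn m)) mulr0z addr0.
- by rewrite ltnS leqNgt H /= mulr0z addr0.
- by subst n; rewrite ltnSn mulr1z add0r.
Qed.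

Lemma gevalE (M : zmodType) (env : seq M) e :
  geval env e = \sum_(k < size env) nth 0 env k *~ gcoef e k.
Proof.
elim: e => [n|a IHa b IHb|a IHa|] /=.
- rewrite sum_at; case: ltnP => // H; by rewrite nth_default.
- by rewrite IHa IHb -big_split /=; apply: eq_bigr => i _; rewrite mulrzDr.
- by rewrite IHa -sumrN; apply: eq_bigr => i _; rewrite mulrNz.
- by rewrite big1 // => i _; rewrite mulr0z.
Qed.

Lemma gsound (M : zmodType) (env : seq M) e :
  all (fun k => gcoef e k == 0) (iota 0 (size env)) -> geval env e = 0.
Proof.
move=> /allP H; rewrite gevalE big1 // => i _.
have := H i; rewrite mem_iota add0n ltn_ord => /(_ isT) /eqP ->.
by rewrite mulr0z.
Qed.

Ltac gins x l := lazymatch l with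
 | nil => constr:(x :: nil)
 | ?y :: ?r => match l with
     | _ => let _ := constr:(erefl x : x = y) in l
     | _ => let r' := gins x r in constr:(y :: r')
     end
 end.

Ltac gcollect e acc := lazymatch e with
 | GRing.add ?a ?b => let acc1 := gcollect a acc in gcollect b acc1
 | GRing.opp ?a => gcollect a acc
 | GRing.zero => acc
 | _ => gins e acc
 end.

Ltac gidx x l := lazymatch l with
 | ?y :: ?r => match l with
     | _ => let _ := constr:(erefl x : x = y) in constr:(0%N)
     | _ => let n := gidx x r in constr:(n.+1)
     end
 end.

Ltac greify e env := lazymatch e with
 | GRing.add ?a ?b => let ra := greify a env in let rb := greify b env in constr:(GAdd ra rb)
 | GRing.opp ?a => let ra := greify a env in constr:(GOpp ra)
 | GRing.zero => constr:(GZero)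
 | _ => let n := gidx e env in constr:(GAt n)
 end.

Ltac gcancel :=
  apply/eqP; rewrite -subr_eq0; apply/eqP;
  lazymatch goal with |- ?e = 0 =>
    let M := type of e in
    let env := gcollect e (@nil M) in
    let r := greify e env in
    exact (@gsound _ env r erefl)
  end.

Example ex1 (M : zmodType) (a b c : M) : a + (b - c) = - c + a + b.
Proof. gcancel. Qed.

Lemma dbl0 (M : zmodType) (t : M) : t = t + t -> t = 0.
Proof. move=> h; have: t + t - t = t - t by rewrite -h. by rewrite addrK subrr. Qed.

Lemma sum0_opp (M : zmodType) (x y : M) : x + y = 0 -> x = - y.
Proof. by move=> h; apply/eqP; rewrite -addr_eq0 h. Qed.

Ltac dsimp := rewrite /dform /=; rewrite (eq_bigr _ (fun i _ => big_mkcond _ _));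
  rewrite !big_ord_recl !big_ord0 /= /bump /= /drop_at /=;
  rewrite ?expr0 ?expr1 ?scale1r ?scaleN1r ?(exprS, expr0) ?mulrN1 ?mulN1r ?opprK ?mulr1 ?scale1r ?scaleN1r ?addr0 ?add0r ?scaler0.

Lemma dform2 {C : comNzRingType} {T : zmodType} {V : lmodType C}
  (nab : T -> V -> V) (br : T -> T -> T) (phi : seq T -> V) a b :
  dform nab br phi [:: a; b] = nab a (phi [:: b]) - nab b (phi [:: a]) - phi [:: br a b].
Proof. by dsimp. Qed.

Lemma dform3 {C : comNzRingType} {T : zmodType} {V : lmodType C}
  (nab : T -> V -> V) (br : T -> T -> T) (phi : seq T -> V) a b c :
  dform nab br phi [:: a; b; c] =
  nab a (phi [:: b; c]) - nab b (phi [:: a; c]) + nab c (phi [:: a; b])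
  - phi [:: br a b; c] + phi [:: br a c; b] - phi [:: br b c; a].
Proof. dsimp. gcancel. Qed.

Lemma dform4 {C : comNzRingType} {T : zmodType} {V : lmodType C}
  (nab : T -> V -> V) (br : T -> T -> T) (phi : seq T -> V) a b c d :
  dform nab br phi [:: a; b; c; d] =
  nab a (phi [:: b; c; d]) - nab b (phi [:: a; c; d]) + nab c (phi [:: a; b; d])
  - nab d (phi [:: a; b; c])
  - phi [:: br a b; c; d] + phi [:: br a c; b; d] - phi [:: br a d; b; c]
  - phi [:: br b c; a; d] + phi [:: br b d; a; c] - phi [:: br c d; a; b].
Proof. dsimp. gcancel. Qed.

Lemma d2 {C : comNzRingType} {T : zmodType} {M : lmodType C}
  (nab : T -> M -> M) (br : T -> T -> T) (phi : seq T -> M)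
  (nabD : forall x u v, nab x (u + v) = nab x u + nab x v)
  (nabbr : forall x y v, nab (br x y) v = nab x (nab y v) - nab y (nab x v))
  (brDl : forall x y w, br (x + y) w = br x w + br y w)
  (brA : forall x y, br x y = - br y x)
  (Jac : forall x y w, br x (br y w) + br y (br w x) + br w (br x y) = 0)
  (phiD : forall x y w, phi [:: x + y; w] = phi [:: x; w] + phi [:: y; w])
  (phiA : forall x y, phi [:: x; y] = - phi [:: y; x]) a b c d :
  dform nab br (dform nab br phi) [:: a; b; c; d] = 0.
Proof.
have nab0 x : nab x 0 = 0 by apply: dbl0; rewrite -nabD addr0.
have nabN x u : nab x (- u) = - nab x u by apply: sum0_opp; rewrite -nabD addNr nab0.
have br0 y : br 0 y = 0 by apply: dbl0; rewrite -brDl addr0.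
have brN x y : br (- x) y = - br x y by apply: sum0_opp; rewrite -brDl addNr br0.
have phi0 y : phi [:: 0; y] = 0 by apply: dbl0; rewrite -phiD addr0.
have phiN x y : phi [:: - x; y] = - phi [:: x; y] by apply: sum0_opp; rewrite -phiD addNr phi0.
rewrite dform4 !dform3.
rewrite !nabbr.
rewrite !(nabD, nabN).
have Jr x y w : br (br x w) y = br (br x y) w + br (br y w) x.
  have := Jac x y w.
  rewrite (brA x (br y w)) (brA y (br w x)) (brA w (br x y)) (brA w x) brN.
  move=> h; apply/eqP; rewrite -subr_eq0; apply/eqP; rewrite -[RHS]h; gcancel.
rewrite (Jr a b c) (Jr a b d) (Jr a c d) (Jr b c d) !phiD.
rewrite (phiA (br c d) (br a b)) (phiA (br b d) (br a c)) (phiA (br b c) (br a d)).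
gcancel.
Qed.

Section CL.
Variables (C : comNzRingType) (U V : lmodType C) (f : U -> V) (Hf : Clinear f).
Lemma clD x y : f (x + y) = f x + f y.
Proof. by have := Hf 1 x y; rewrite !scale1r. Qed.
Lemma cl0 : f 0 = 0.
Proof. by apply: dbl0; rewrite -clD addr0. Qed.
Lemma clN x : f (- x) = - f x.
Proof. by apply: sum0_opp; rewrite -clD addNr cl0. Qed.
Lemma clZ c x : f (c *: x) = c *: f x.
Proof. by have := Hf c x 0; rewrite !addr0 cl0 addr0. Qed.
Lemma clB x y : f (x - y) = f x - f y.
Proof. by rewrite clD clN. Qed.
End CL.

Lemma half_lemma (R : realFieldType) (C : comAlgType R) (M : lmodType C) (x : M) :
  x + x = 0 -> x = 0.
Proof.
move=> h.
have e : ((2^-1 : R)%:A + (2^-1 : R)%:A : C) = 1.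
  by rewrite -scalerDl (_ : 2^-1 + 2^-1 = 1 :> R) ?scale1r //; field.
by rewrite -[x]scale1r -e scalerDl -scalerDr h scaler0.
Qed.

Section Main.
Variables (R : realFieldType) (C : comAlgType R)
  (TX GA GL Lh : lmodType C)
  (act : TX -> C -> C) (brX : TX -> TX -> TX)
  (brA : GA -> GA -> GA) (anc : GA -> TX)
  (iota : GL -> GA) (brL : GL -> GL -> GL) (nabL : GA -> GL -> GL)
  (brH : Lh -> Lh -> Lh) (p : Lh -> GL) (z : C -> Lh) (nabH : GA -> Lh -> Lh)
  (theta : GA -> GL) (j : GL -> Lh).

Hypothesis HA : lie_rinehart brA (fun x => act (anc x)).
Hypothesis Hanc : Clinear anc.
Hypothesis Hsurj : forall X, exists x, anc x = X.
Hypothesis Hancbr : forall x y, anc (brA x y) = brX (anc x) (anc y).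
Hypothesis Hiota : Clinear iota.
Hypothesis Hinj : injective iota.
Hypothesis Hker : forall x, anc x = 0 <-> exists l, x = iota l.
Hypothesis HbrL : forall l m, iota (brL l m) = brA (iota l) (iota m).
Hypothesis HnabL : forall x l, iota (nabL x l) = brA x (iota l).
Hypothesis HH : lie_alg brH.
Hypothesis HbrHZ : forall (c : C) h k, brH (c *: h) k = c *: brH h k.
Hypothesis Hp : Clinear p.
Hypothesis Hpbr : forall h k, p (brH h k) = brL (p h) (p k).
Hypothesis Hz : Clinear (z : C^o -> Lh).
Hypothesis Hzinj : injective z.
Hypothesis Hpker : forall h, p h = 0 <-> exists f, h = z f.
Hypothesis Hzc : forall f h, brH (z f) h = 0.
Hypothesis Hrep : is_rep act brA anc nabH.
Hypothesis Hder : forall x h k, nabH x (brH h k) = brH (nabH x h) k + brH h (nabH x k).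
Hypothesis HpnabH : forall x h, p (nabH x h) = nabL x (p h).
Hypothesis HnabHz : forall x f, nabH x (z f) = z (act (anc x) f).
Hypothesis HnabHL : forall l hl h, p hl = l -> nabH (iota l) h = brH hl h.
Hypothesis Hth : Clinear theta.
Hypothesis Hthi : forall l, theta (iota l) = l.
Hypothesis Hj : Clinear j.
Hypothesis Hpj : forall l, p (j l) = l.

Lemma brADl x y w : brA (x + y) w = brA x w + brA y w.
Proof. by case: HA => [[]]. Qed.
Lemma brAC x y : brA x y = - brA y x.
Proof. by case: HA => [[_ [_ []]]]. Qed.
Lemma brAJ x y w : brA x (brA y w) + brA y (brA w x) + brA w (brA x y) = 0.
Proof. by case: HA => [[_ [_ [_ ]]]]. Qed.
Lemma brAZr x (f : C) y : brA x (f *: y) = f *: brA x y + act (anc x) f *: y.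
Proof. by case: HA => [_ [_ [_ ]]]. Qed.
Lemma actD x f g : act (anc x) (f + g) = act (anc x) f + act (anc x) g.
Proof. by case: HA => [_ [[]]]. Qed.
Lemma actM x f g : act (anc x) (f * g) = act (anc x) f * g + f * act (anc x) g.
Proof. by case: HA => [_ [[_ [_ []]]]]. Qed.
Lemma actL (c : C) x y f : act (anc (c *: x + y)) f = c * act (anc x) f + act (anc y) f.
Proof. by case: HA => [_ [[_ [_ [_ ]]]]]. Qed.
Lemma actbr x y f : act (anc (brA x y)) f = act (anc x) (act (anc y) f) - act (anc y) (act (anc x) f).
Proof. by case: HA => [_ [_ []]]. Qed.

Lemma anc0 : anc 0 = 0. Proof. exact: cl0 Hanc. Qed.
Lemma act00 f : act 0 f = 0.
Proof.
have := actL (-1) 0 0 f; rewrite scaleN1r oppr0 addr0 anc0 mulN1r addNr.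
done.
Qed.
Lemma ancI l : anc (iota l) = 0.
Proof. by apply/Hker; exists l. Qed.
Lemma actI l f : act (anc (iota l)) f = 0.
Proof. by rewrite ancI act00. Qed.
Lemma act0 x : act (anc x) 0 = 0.
Proof. by apply: dbl0; rewrite -actD addr0. Qed.
Lemma actN x f : act (anc x) (- f) = - act (anc x) f.
Proof. by apply: sum0_opp; rewrite -actD addNr act0. Qed.


Ltac useh h := apply/eqP; rewrite -subr_eq0; apply/eqP;
  first [ rewrite -[RHS]h; gcancel | rewrite -oppr0 -[in RHS]h; gcancel ].

Lemma brA0l y : brA 0 y = 0.
Proof. by apply: dbl0; rewrite -brADl addr0. Qed.
Lemma brANl x y : brA (- x) y = - brA x y.
Proof. by apply: sum0_opp; rewrite -brADl addNr brA0l. Qed.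
Lemma brADr x y w : brA w (x + y) = brA w x + brA w y.
Proof. by rewrite brAC brADl opprD -!brAC. Qed.
Lemma brA0r y : brA y 0 = 0.
Proof. by rewrite brAC brA0l oppr0. Qed.
Lemma brANr x y : brA y (- x) = - brA y x.
Proof. by rewrite brAC brANl opprK -brAC. Qed.
Lemma brAZl (f : C) x y : brA (f *: x) y = f *: brA x y - act (anc y) f *: x.
Proof. by rewrite brAC brAZr opprD -scalerN -brAC. Qed.
Lemma brAxx x : brA x x = 0.
Proof. by apply: (half_lemma (R:=R)); rewrite {1}brAC addNr. Qed.
Lemma brAIZl l (f : C) y : brA (f *: iota l) y = f *: brA (iota l) y - act (anc y) f *: iota l.
Proof. exact: brAZl. Qed.
Lemma brAIZr l (f : C) y : brA (iota l) (f *: y) = f *: brA (iota l) y.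
Proof. by rewrite brAZr actI scale0r addr0. Qed.
Lemma brAbr x y w : brA (brA x y) w = brA x (brA y w) - brA y (brA x w).
Proof.
have := brAJ x y w; rewrite (brAC w (brA x y)) (brAC w x) brANr => h; useh h.
Qed.

Lemma iD x y : iota (x + y) = iota x + iota y. Proof. exact: clD. Qed.
Lemma iN x : iota (- x) = - iota x. Proof. exact: clN. Qed.
Lemma iZ c x : iota (c *: x) = c *: iota x. Proof. exact: clZ. Qed.
Lemma i0 : iota 0 = 0. Proof. exact: cl0. Qed.
Lemma jD x y : j (x + y) = j x + j y. Proof. exact: clD. Qed.
Lemma jN x : j (- x) = - j x. Proof. exact: clN. Qed.
Lemma jZ c x : j (c *: x) = c *: j x. Proof. exact: clZ. Qed.
Lemma j0 : j 0 = 0. Proof. exact: cl0. Qed.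
Lemma tD x y : theta (x + y) = theta x + theta y. Proof. exact: clD. Qed.
Lemma tN x : theta (- x) = - theta x. Proof. exact: clN. Qed.
Lemma tZ c x : theta (c *: x) = c *: theta x. Proof. exact: clZ. Qed.
Lemma t0 : theta 0 = 0. Proof. exact: cl0. Qed.
Lemma pD x y : p (x + y) = p x + p y. Proof. exact: clD. Qed.
Lemma pN x : p (- x) = - p x. Proof. exact: clN. Qed.
Lemma p0 : p 0 = 0. Proof. exact: cl0. Qed.
Lemma zD (x y : C) : z (x + y) = z x + z y. Proof. exact: (clD Hz). Qed.
Lemma zN (x : C) : z (- x) = - z x. Proof. exact: (clN Hz). Qed.
Lemma zM (c x : C) : z (c * x) = c *: z x. Proof. exact: (clZ Hz). Qed.
Lemma z0 : z 0 = 0. Proof. exact: (cl0 Hz). Qed.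

Lemma nabLDl x y l : nabL (x + y) l = nabL x l + nabL y l.
Proof. by apply: Hinj; rewrite iD !HnabL brADl. Qed.
Lemma nabLZl c x l : nabL (c *: x) l = c *: nabL x l.
Proof. by apply: Hinj; rewrite iZ !HnabL brAZl actI scale0r subr0. Qed.
Lemma nabL0l l : nabL 0 l = 0.
Proof. by apply: dbl0; rewrite -nabLDl addr0. Qed.
Lemma nabLNl x l : nabL (- x) l = - nabL x l.
Proof. by apply: sum0_opp; rewrite -nabLDl addNr nabL0l. Qed.
Lemma nabLDr x l m : nabL x (l + m) = nabL x l + nabL x m.
Proof. by apply: Hinj; rewrite iD !HnabL iD brADr. Qed.
Lemma nabL0r x : nabL x 0 = 0.
Proof. by apply: dbl0; rewrite -nabLDr addr0. Qed.
Lemma nabLNr x l : nabL x (- l) = - nabL x l.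
Proof. by apply: sum0_opp; rewrite -nabLDr addNr nabL0r. Qed.
Lemma nabLZr x c l : nabL x (c *: l) = c *: nabL x l + act (anc x) c *: l.
Proof. by apply: Hinj; rewrite iD !iZ !HnabL iZ brAZr. Qed.
Lemma nabLI m l : nabL (iota m) l = brL m l.
Proof. by apply: Hinj; rewrite HnabL HbrL. Qed.
Lemma nabLbr x y l : nabL (brA x y) l = nabL x (nabL y l) - nabL y (nabL x l).
Proof. by apply: Hinj; rewrite iD iN !HnabL brAbr. Qed.

Lemma brLC l m : brL l m = - brL m l.
Proof. by apply: Hinj; rewrite iN !HbrL brAC. Qed.
Lemma brLDl l m n : brL (l + m) n = brL l n + brL m n.
Proof. by apply: Hinj; rewrite !(iD, HbrL) brADl. Qed.
Lemma brLDr l m n : brL n (l + m) = brL n l + brL n m.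
Proof. by apply: Hinj; rewrite !(iD, HbrL) brADr. Qed.
Lemma brL0l l : brL 0 l = 0.
Proof. by apply: dbl0; rewrite -brLDl addr0. Qed.
Lemma brL0r l : brL l 0 = 0.
Proof. by apply: dbl0; rewrite -brLDr addr0. Qed.
Lemma brLNl l m : brL (- l) m = - brL l m.
Proof. by apply: sum0_opp; rewrite -brLDl addNr brL0l. Qed.
Lemma brLNr l m : brL m (- l) = - brL m l.
Proof. by apply: sum0_opp; rewrite -brLDr addNr brL0r. Qed.
Lemma brLZl c l m : brL (c *: l) m = c *: brL l m.
Proof. by apply: Hinj; rewrite !(iZ, HbrL) brAZl actI scale0r subr0. Qed.
Lemma brLZr c l m : brL l (c *: m) = c *: brL l m.
Proof. by apply: Hinj; rewrite !(iZ, HbrL) brAIZr. Qed.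
Lemma brLxx l : brL l l = 0.
Proof. by apply: Hinj; rewrite HbrL brAxx i0. Qed.

Lemma brHDl h k w : brH (h + k) w = brH h w + brH k w.
Proof. by case: HH => []. Qed.
Lemma brHC h k : brH h k = - brH k h.
Proof. by case: HH => [_ [_ []]]. Qed.
Lemma brHDr h k w : brH w (h + k) = brH w h + brH w k.
Proof. by rewrite brHC brHDl opprD -!brHC. Qed.
Lemma brH0l h : brH 0 h = 0.
Proof. by apply: dbl0; rewrite -brHDl addr0. Qed.
Lemma brH0r h : brH h 0 = 0.
Proof. by apply: dbl0; rewrite -brHDr addr0. Qed.
Lemma brHNl h k : brH (- h) k = - brH h k.
Proof. by apply: sum0_opp; rewrite -brHDl addNr brH0l. Qed.
Lemma brHNr h k : brH k (- h) = - brH k h.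
Proof. by apply: sum0_opp; rewrite -brHDr addNr brH0r. Qed.
Lemma brHZl c h k : brH (c *: h) k = c *: brH h k.
Proof. exact: HbrHZ. Qed.
Lemma brHZr c h k : brH h (c *: k) = c *: brH h k.
Proof. by rewrite brHC brHZl -scalerN -brHC. Qed.
Lemma brHxx h : brH h h = 0.
Proof. by apply: (half_lemma (R:=R)); rewrite {1}brHC addNr. Qed.
Lemma brHzl f h : brH (z f) h = 0. Proof. exact: Hzc. Qed.
Lemma brHzr f h : brH h (z f) = 0. Proof. by rewrite brHC Hzc oppr0. Qed.

Lemma nabHL c x y v : nabH (c *: x + y) v = c *: nabH x v + nabH y v.
Proof. by case: Hrep. Qed.
Lemma nabHDl x y v : nabH (x + y) v = nabH x v + nabH y v.
Proof. by have := nabHL 1 x y v; rewrite !scale1r. Qed.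
Lemma nabH0l v : nabH 0 v = 0.
Proof. by apply: dbl0; rewrite -nabHDl addr0. Qed.
Lemma nabHZl c x v : nabH (c *: x) v = c *: nabH x v.
Proof. by have := nabHL c x 0 v; rewrite !addr0 nabH0l addr0. Qed.
Lemma nabHNl x v : nabH (- x) v = - nabH x v.
Proof. by apply: sum0_opp; rewrite -nabHDl addNr nabH0l. Qed.
Lemma nabHDr x v w : nabH x (v + w) = nabH x v + nabH x w.
Proof. by case: Hrep => [_ []]. Qed.
Lemma nabH0r x : nabH x 0 = 0.
Proof. by apply: dbl0; rewrite -nabHDr addr0. Qed.
Lemma nabHNr x v : nabH x (- v) = - nabH x v.
Proof. by apply: sum0_opp; rewrite -nabHDr addNr nabH0r. Qed.
Lemma nabHZr x (f : C) v : nabH x (f *: v) = f *: nabH x v + act (anc x) f *: v.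
Proof. by case: Hrep => [_ [_ []]]. Qed.
Lemma nabHbr x y v : nabH (brA x y) v = nabH x (nabH y v) - nabH y (nabH x v).
Proof. by case: Hrep => [_ [_ [_ ]]]. Qed.
Lemma nabHI m h : nabH (iota m) h = brH (j m) h.
Proof. exact: HnabHL (Hpj m). Qed.

Notation DJ := (dj nabL nabH j).
Notation SIG := (sigma brL brH j).
Notation Vf a b := (varpi brA brL nabL brH nabH theta j [:: a; b]).

Lemma djDl x y l : DJ (x + y) l = DJ x l + DJ y l.
Proof. rewrite /dj nabHDl nabLDl jD; gcancel. Qed.
Lemma djZl c x l : DJ (c *: x) l = c *: DJ x l.
Proof. by rewrite /dj nabHZl nabLZl jZ scalerBr. Qed.
Lemma dj0l l : DJ 0 l = 0.
Proof. by rewrite /dj nabH0l nabL0l j0 subr0. Qed.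
Lemma djNl x l : DJ (- x) l = - DJ x l.
Proof. rewrite /dj nabHNl nabLNl jN; gcancel. Qed.
Lemma djDr x l m : DJ x (l + m) = DJ x l + DJ x m.
Proof. rewrite /dj jD nabHDr nabLDr jD; gcancel. Qed.
Lemma djZr x c l : DJ x (c *: l) = c *: DJ x l.
Proof. rewrite /dj jZ nabHZr nabLZr jD !jZ scalerBr; gcancel. Qed.
Lemma dj0r x : DJ x 0 = 0.
Proof. by rewrite /dj j0 nabH0r nabL0r j0 subr0. Qed.
Lemma djNr x l : DJ x (- l) = - DJ x l.
Proof. rewrite /dj jN nabHNr nabLNr jN; gcancel. Qed.
Lemma djI m l : DJ (iota m) l = - SIG m l.
Proof. rewrite /dj /sigma nabHI nabLI; gcancel. Qed.

Lemma sigC l m : SIG l m = - SIG m l.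
Proof. rewrite /sigma brLC jN brHC; gcancel. Qed.
Lemma sigDl l m n : SIG (l + m) n = SIG l n + SIG m n.
Proof. rewrite /sigma brLDl jD jD brHDl; gcancel. Qed.
Lemma sigDr l m n : SIG n (l + m) = SIG n l + SIG n m.
Proof. rewrite /sigma brLDr jD jD brHDr; gcancel. Qed.
Lemma sigZl c l m : SIG (c *: l) m = c *: SIG l m.
Proof. by rewrite /sigma brLZl !jZ brHZl scalerBr. Qed.
Lemma sigZr c l m : SIG l (c *: m) = c *: SIG l m.
Proof. by rewrite /sigma brLZr !jZ brHZr scalerBr. Qed.
Lemma sig0l l : SIG 0 l = 0.
Proof. by rewrite /sigma brL0l j0 brH0l subr0. Qed.
Lemma sig0r l : SIG l 0 = 0.
Proof. by rewrite /sigma brL0r j0 brH0r subr0. Qed.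
Lemma sigNl l m : SIG (- l) m = - SIG l m.
Proof. rewrite /sigma brLNl jN jN brHNl; gcancel. Qed.
Lemma sigNr l m : SIG l (- m) = - SIG l m.
Proof. rewrite /sigma brLNr jN jN brHNr; gcancel. Qed.
Lemma sigxx l : SIG l l = 0.
Proof. by rewrite /sigma brLxx j0 brHxx subr0. Qed.

Lemma pdj x l : p (DJ x l) = 0.
Proof. by rewrite /dj pD pN HpnabH !Hpj subrr. Qed.
Lemma psig l m : p (SIG l m) = 0.
Proof. by rewrite /sigma pD pN Hpbr !Hpj subrr. Qed.

Lemma VE a b : Vf a b = DJ a (theta b) - DJ b (theta a) + SIG (theta a) (theta b).
Proof.
rewrite /varpi /Fjtheta /Ftheta !dform2 /jtheta1 /theta1 /= /dj /sigma.
rewrite !(jD, jN); gcancel.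
Qed.

Lemma VDl x y b : Vf (x + y) b = Vf x b + Vf y b.
Proof. rewrite !VE !(tD, djDl, djDr, sigDl); gcancel. Qed.
Lemma VDr x y b : Vf b (x + y) = Vf b x + Vf b y.
Proof. rewrite !VE !(tD, djDl, djDr, sigDr); gcancel. Qed.
Lemma VZl c x b : Vf (c *: x) b = c *: Vf x b.
Proof. rewrite !VE !(tZ, djZl, djZr, sigZl) !(scalerDr, scalerN); gcancel. Qed.
Lemma VZr c x b : Vf b (c *: x) = c *: Vf b x.
Proof. rewrite !VE !(tZ, djZl, djZr, sigZr) !(scalerDr, scalerN); gcancel. Qed.
Lemma VC a b : Vf a b = - Vf b a.
Proof. rewrite !VE (sigC (theta b)); gcancel. Qed.
Lemma Vxx a : Vf a a = 0.
Proof. by rewrite VE sigxx subrr addr0. Qed.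
Lemma V0l b : Vf 0 b = 0.
Proof. by apply: dbl0; rewrite -VDl addr0. Qed.
Lemma VNl x b : Vf (- x) b = - Vf x b.
Proof. by apply: sum0_opp; rewrite -VDl addNr V0l. Qed.
Lemma V0r b : Vf b 0 = 0.
Proof. by apply: dbl0; rewrite -VDr addr0. Qed.
Lemma VNr x b : Vf b (- x) = - Vf b x.
Proof. by apply: sum0_opp; rewrite -VDr addNr V0r. Qed.
Lemma VI l x : Vf (iota l) x = - DJ x l.
Proof. rewrite VE Hthi djI; gcancel. Qed.
Lemma pV a b : p (Vf a b) = 0.
Proof. by rewrite VE pD pD pN !pdj psig !addr0 subr0. Qed.

Lemma exW a b : exists f : C, z f = Vf a b.
Proof. by have [/(_ (pV a b)) [f ->] _] := Hpker (Vf a b); exists f. Qed.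
Definition W a b : C := proj1_sig (constructive_indefinite_description _ (exW a b)).
Lemma zW a b : z (W a b) = Vf a b.
Proof. exact: proj2_sig (constructive_indefinite_description _ (exW a b)). Qed.
Definition w : seq GA -> C^o := fun s => W (nth 0 s 0) (nth 0 s 1).

Lemma WDl x y b : W (x + y) b = W x b + W y b.
Proof. by apply: Hzinj; rewrite zD !zW VDl. Qed.
Lemma WDr x y b : W b (x + y) = W b x + W b y.
Proof. by apply: Hzinj; rewrite zD !zW VDr. Qed.
Lemma WZl c x b : W (c *: x) b = c * W x b.
Proof. by apply: Hzinj; rewrite zM !zW VZl. Qed.
Lemma WZr c x b : W b (c *: x) = c * W b x.
Proof. by apply: Hzinj; rewrite zM !zW VZr. Qed.
Lemma WC a b : W a b = - W b a.
Proof. by apply: Hzinj; rewrite zN !zW VC. Qed.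
Lemma Wxx a : W a a = 0.
Proof. by apply: Hzinj; rewrite z0 zW Vxx. Qed.

Definition Tf a b c := nabH a (Vf b c) - nabH b (Vf a c) + nabH c (Vf a b)
  - Vf (brA a b) c + Vf (brA a c) b - Vf (brA b c) a.
Definition U a b c : C := dA act brA anc w [:: a; b; c].

Lemma zU a b c : z (U a b c) = Tf a b c.
Proof.
by rewrite /U /dA dform3 /w /= /Tf !(zD, zN) -!HnabHz !zW.
Qed.

Lemma TfI0 l b c : Tf (iota l) b c = 0.
Proof.
rewrite /Tf nabHI -(zW b c) brHzr (VI l c) (VI l b) (brAC (iota l) b) (brAC (iota l) c).
rewrite -!HnabL !VNl !VI (VC (brA b c) (iota l)) VI.
rewrite /dj !(nabHNr, nabHDr, nabHbr, nabLbr, jD, jN, opprK).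
gcancel.
Qed.

Lemma TfC01 a b c : Tf b a c = - Tf a b c.
Proof. rewrite /Tf (VC b a) (brAC b a) VNl !nabHNr; gcancel. Qed.
Lemma TfC12 a b c : Tf a c b = - Tf a b c.
Proof. rewrite /Tf (VC c b) (brAC c b) VNl !nabHNr; gcancel. Qed.
Lemma TfD0 x y b c : Tf (x + y) b c = Tf x b c + Tf y b c.
Proof. rewrite /Tf -!zW !(WDl, WDr, brADl, brADr, zD, nabHDl, nabHDr); gcancel. Qed.
Lemma TfD1 x y a c : Tf a (x + y) c = Tf a x c + Tf a y c.
Proof. by rewrite TfC01 TfD0 opprD -!TfC01. Qed.
Lemma TfD2 x y a b : Tf a b (x + y) = Tf a b x + Tf a b y.
Proof. by rewrite TfC12 TfD1 opprD -!TfC12. Qed.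
Lemma TfI1 l a c : Tf a (iota l) c = 0.
Proof. by rewrite TfC01 TfI0 oppr0. Qed.
Lemma TfI2 l a b : Tf a b (iota l) = 0.
Proof. by rewrite TfC12 TfI1 oppr0. Qed.

Definition hz x := x - iota (theta x).
Lemma thz x : theta (hz x) = 0.
Proof. by rewrite /hz tD tN Hthi subrr. Qed.
Lemma hzE x : x = hz x + iota (theta x).
Proof. by rewrite /hz subrK. Qed.
Lemma hzD x y : hz (x + y) = hz x + hz y.
Proof. rewrite /hz tD iD; gcancel. Qed.
Lemma hzZ c x : hz (c *: x) = c *: hz x.
Proof. by rewrite /hz tZ iZ scalerBr. Qed.

Lemma Tf_hz a b c : Tf a b c = Tf (hz a) (hz b) (hz c).
Proof.
rewrite {1}(hzE a) TfD0 TfI0 addr0 {1}(hzE b) TfD1 TfI1 addr0.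
by rewrite {1}(hzE c) TfD2 TfI2 addr0.
Qed.

Lemma Tf_hor a b c : theta a = 0 -> theta b = 0 -> theta c = 0 ->
  Tf a b c = DJ c (theta (brA a b)) - DJ b (theta (brA a c)) + DJ a (theta (brA b c)).
Proof.
move=> ha hb hc; rewrite /Tf !VE ha hb hc !(dj0r, sig0l, sig0r) !(subrr, addr0, nabH0r).
gcancel.
Qed.

Notation FB a b := (Ftheta brA brL nabL theta [:: a; b]).
Notation DT := (dthj iota nabL nabH theta j).

Lemma FbE a b : FB a b = nabL a (theta b) - nabL b (theta a) - theta (brA a b) - brL (theta a) (theta b).
Proof. by rewrite /Ftheta dform2 /theta1 /=. Qed.
Lemma FbDl x y b : FB (x + y) b = FB x b + FB y b.
Proof. rewrite !FbE !(tD, nabLDl, nabLDr, brADl, brLDl); gcancel. Qed.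
Lemma FbDr x y b : FB b (x + y) = FB b x + FB b y.
Proof. rewrite !FbE !(tD, nabLDl, nabLDr, brADr, brLDr); gcancel. Qed.
Lemma FbI0 l b : FB (iota l) b = 0.
Proof. rewrite FbE Hthi nabLI (brAC (iota l) b) -HnabL tN Hthi; gcancel. Qed.
Lemma FbI1 l a : FB a (iota l) = 0.
Proof. rewrite FbE Hthi nabLI -HnabL Hthi (brLC (theta a) l); gcancel. Qed.
Lemma FbH a b : FB a b = - theta (brA (hz a) (hz b)).
Proof.
rewrite {1}(hzE a) FbDl FbI0 addr0 {1}(hzE b) FbDr FbI1 addr0 FbE !thz !nabL0r brL0l.
gcancel.
Qed.
Lemma FbC a b : FB a b = - FB b a.
Proof. rewrite !FbE (brLC (theta a)) (brAC a b) tN; gcancel. Qed.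
Lemma FbZl c a b : FB (c *: a) b = c *: FB a b.
Proof. by rewrite !FbH hzZ brAZl tD tN !tZ thz scaler0 subr0 scalerN. Qed.
Lemma FbZr c a b : FB b (c *: a) = c *: FB b a.
Proof. by rewrite FbC FbZl -scalerN -FbC. Qed.
Lemma Fbxx a : FB a a = 0.
Proof. by rewrite FbH brAxx t0 oppr0. Qed.

Lemma DTE x l : DT x l = DJ (hz x) l. Proof. by []. Qed.
Lemma DTDl x y l : DT (x + y) l = DT x l + DT y l.
Proof. by rewrite !DTE hzD djDl. Qed.
Lemma DTZl c x l : DT (c *: x) l = c *: DT x l.
Proof. by rewrite !DTE hzZ djZl. Qed.
Lemma DTDr x l m : DT x (l + m) = DT x l + DT x m.
Proof. by rewrite !DTE djDr. Qed.
Lemma DTZr c x l : DT x (c *: l) = c *: DT x l.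
Proof. by rewrite !DTE djZr. Qed.
Lemma DTNr x l : DT x (- l) = - DT x l.
Proof. by rewrite !DTE djNr. Qed.

Definition P a b c := - pair12 DT (Ftheta brA brL nabL theta) [:: a; b; c].
Lemma PE a b c : P a b c = - (DT a (FB b c) - DT b (FB a c) + DT c (FB a b)).
Proof. by []. Qed.

Lemma TfP a b c : Tf a b c = P a b c.
Proof.
rewrite Tf_hz Tf_hor ?thz // PE !FbH !DTE !djNr; gcancel.
Qed.

Lemma zUP a b c : z (U a b c) = P a b c.
Proof. by rewrite zU TfP. Qed.

Definition Fk := locked (fun a b => FB a b).
Definition Dk := locked DT.
Lemma FkE a b : Fk a b = FB a b. Proof. by rewrite /Fk -lock. Qed.
Lemma DkE x l : Dk x l = DT x l. Proof. by rewrite /Dk -lock. Qed.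
Lemma FkDl x y b : Fk (x + y) b = Fk x b + Fk y b. Proof. by rewrite !FkE FbDl. Qed.
Lemma FkDr x y b : Fk b (x + y) = Fk b x + Fk b y. Proof. by rewrite !FkE FbDr. Qed.
Lemma FkZl c x b : Fk (c *: x) b = c *: Fk x b. Proof. by rewrite !FkE FbZl. Qed.
Lemma FkZr c x b : Fk b (c *: x) = c *: Fk b x. Proof. by rewrite !FkE FbZr. Qed.
Lemma FkC a b : Fk a b = - Fk b a. Proof. by rewrite !FkE FbC. Qed.
Lemma Fkxx a : Fk a a = 0. Proof. by rewrite !FkE Fbxx. Qed.
Lemma DkDl x y l : Dk (x + y) l = Dk x l + Dk y l. Proof. by rewrite !DkE DTDl. Qed.
Lemma DkDr x l m : Dk x (l + m) = Dk x l + Dk x m. Proof. by rewrite !DkE DTDr. Qed.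
Lemma DkZl c x l : Dk (c *: x) l = c *: Dk x l. Proof. by rewrite !DkE DTZl. Qed.
Lemma DkZr c x l : Dk x (c *: l) = c *: Dk x l. Proof. by rewrite !DkE DTZr. Qed.
Lemma DkNr x l : Dk x (- l) = - Dk x l. Proof. by rewrite !DkE DTNr. Qed.
Lemma Dk0r x : Dk x 0 = 0. Proof. by rewrite !DkE DTE dj0r. Qed.
Lemma PkE a b c : P a b c = - (Dk a (Fk b c) - Dk b (Fk a c) + Dk c (Fk a b)).
Proof. by rewrite !DkE !FkE. Qed.

Ltac Psimp := rewrite ?PkE !(FkDl, FkDr, FkZl, FkZr, DkDl, DkZl, DkDr, DkZr)
   ?(scalerDr, scalerN, opprD).

Lemma UL0 c x y b e : U (c *: x + y) b e = c * U x b e + U y b e.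
Proof. apply: Hzinj; rewrite (zD (c * _)) zM !zUP; Psimp; gcancel. Qed.
Lemma UL1 c x y b e : U b (c *: x + y) e = c * U b x e + U b y e.
Proof. apply: Hzinj; rewrite (zD (c * _)) zM !zUP; Psimp; gcancel. Qed.
Lemma UL2 c x y b e : U b e (c *: x + y) = c * U b e x + U b e y.
Proof. apply: Hzinj; rewrite (zD (c * _)) zM !zUP; Psimp; gcancel. Qed.
Lemma UD0 x y b e : U (x + y) b e = U x b e + U y b e.
Proof. by have := UL0 1 x y b e; rewrite scale1r mul1r. Qed.
Lemma UD1 x y b e : U b (x + y) e = U b x e + U b y e.
Proof. by have := UL1 1 x y b e; rewrite scale1r mul1r. Qed.
Lemma UD2 x y b e : U b e (x + y) = U b e x + U b e y.
Proof. by have := UL2 1 x y b e; rewrite scale1r mul1r. Qed.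
Lemma UI0 l b e : U (iota l) b e = 0.
Proof. by apply: Hzinj; rewrite zU TfI0 z0. Qed.
Lemma UI1 l b e : U b (iota l) e = 0.
Proof. by apply: Hzinj; rewrite zU TfI1 z0. Qed.
Lemma UI2 l b e : U b e (iota l) = 0.
Proof. by apply: Hzinj; rewrite zU TfI2 z0. Qed.
Lemma Uxx01 x e : U x x e = 0.
Proof. apply: Hzinj; rewrite zUP z0 PkE Fkxx !Dk0r; gcancel. Qed.
Lemma Uxx02 x e : U x e x = 0.
Proof. apply: Hzinj; rewrite zUP z0 PkE Fkxx (FkC e x) Dk0r DkNr; gcancel. Qed.
Lemma Uxx12 x e : U e x x = 0.
Proof. apply: Hzinj; rewrite zUP z0 PkE Fkxx !Dk0r; gcancel. Qed.

Lemma dAdA a b c d : dA act brA anc (dA act brA anc w) [:: a; b; c; d] = 0.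
Proof.
rewrite /dA; apply: d2.
- exact: actD.
- exact: actbr.
- exact: brADl.
- exact: brAC.
- exact: brAJ.
- by move=> x y w'; rewrite /w /= WDl.
- by move=> x y; rewrite /w /= WC.
Qed.

Definition lift X := proj1_sig (constructive_indefinite_description _ (Hsurj X)).
Lemma liftE X : anc (lift X) = X.
Proof. exact: proj2_sig (constructive_indefinite_description _ (Hsurj X)). Qed.
Lemma decomp x y : anc x = anc y -> exists l, x = y + iota l.
Proof.
move=> h; have /Hker [l hl] : anc (x - y) = 0 by rewrite (clB Hanc) h subrr.
by exists l; rewrite -hl addrC subrK.
Qed.
Lemma Ulift a b c : U (lift (anc a)) (lift (anc b)) (lift (anc c)) = U a b c.
Proof.
have [la ->] := decomp (liftE (anc a)).
have [lb ->] := decomp (liftE (anc b)).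
have [lc ->] := decomp (liftE (anc c)).
by rewrite UD0 UI0 addr0 UD1 UI1 addr0 UD2 UI2 addr0.
Qed.
Lemma liftL c X Y : exists l, lift (c *: X + Y) = c *: lift X + lift Y + iota l.
Proof. by apply: decomp; rewrite Hanc !liftE. Qed.

Definition eta (t : seq TX) : C^o := U (lift (nth 0 t 0)) (lift (nth 0 t 1)) (lift (nth 0 t 2)).

Lemma eta_kform : is_kform 3 eta.
Proof.
split.
- move=> s1 s2 c x y.
  case: s1 => [|a1 [|a2 [|a3 s1]]]; case: s2 => [|b1 [|b2 [|b3 s2]]] //= _;
  rewrite /eta /=; have [l ->] := liftL c x y.
  + by rewrite UD0 UI0 addr0 UL0.
  + by rewrite UD1 UI1 addr0 UL1.
  + by rewrite UD2 UI2 addr0 UL2.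
- move=> s1 s2 s3 x.
  case: s1 => [|a1 [|a2 s1]]; case: s2 => [|b1 [|b2 s2]]; case: s3 => [|c1 [|c2 s3]] //= _;
  rewrite /eta /=.
  + exact: Uxx01.
  + exact: Uxx02.
  + exact: Uxx12.
Qed.

Lemma dNpull a b c d : dN act brX eta [:: anc a; anc b; anc c; anc d]
  = dA act brA anc (dA act brA anc w) [:: a; b; c; d].
Proof. by rewrite /dN /dA !dform4 -!Hancbr /eta /= !Ulift. Qed.

Lemma dAI0 l b c : dA act brA anc w [:: iota l; b; c] = 0.
Proof. exact: UI0. Qed.

Lemma main :
  let vp := varpi brA brL nabL brH nabH theta j in
  exists w : seq GA -> C^o,
    is_kform 2 w
    /\ (forall s, size s = 2%N -> z (w s) = vp s)
    /\ (forall s, size s = 2%N ->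
          vp s = pair11 (dj nabL nabH j) (theta1 theta) s
                 + half_sigma_tt brL brH theta j s)
    /\ (forall s, size s = 2%N ->
          vp s = pair11 (dthj iota nabL nabH theta j) (theta1 theta) s
                 - half_sigma_tt brL brH theta j s)
    /\ (forall l s, size s = 2%N -> contract (iota l) (dA act brA anc w) s = 0)
    /\ (forall l s, size s = 3%N -> lieA act brA anc (iota l) (dA act brA anc w) s = 0)
    /\ (exists eta : seq TX -> C^o,
          is_kform 3 eta
          /\ (forall s, size s = 4%N -> dN act brX eta s = 0)
          /\ (forall s, size s = 3%N -> apull anc eta s = dA act brA anc w s)
          /\ (forall s, size s = 3%N ->
                z (apull anc eta s)
                = - pair12 (dthj iota nabL nabH theta j) (Ftheta brA brL nabL theta) s)
          /\ (forall eta' : seq TX -> C^o,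
                is_kform 3 eta'
                -> (forall s, size s = 4%N -> dN act brX eta' s = 0)
                -> (forall s, size s = 3%N -> apull anc eta' s = dA act brA anc w s)
                -> forall t, size t = 3%N -> eta' t = eta t))
    /\ (forall (l : GL) (x : GA), vp [:: iota l; x] = - dj nabL nabH j x l).
Proof.
move=> vp; exists w.
have s2 (s : seq GA) : size s = 2%N -> s = [:: nth 0 s 0; nth 0 s 1].
  by case: s => [|a [|b [|c s]]].
have s3 (T : zmodType) (s : seq T) : size s = 3%N -> s = [:: nth 0 s 0; nth 0 s 1; nth 0 s 2].
  by case: s => [|a [|b [|c [|d s]]]].
split; [|split; [|split; [|split; [|split; [|split; [|split]]]]]].
- split.
  + move=> s1 s2' c x y.
    case: s1 => [|a1 [|a2 s1]]; case: s2' => [|b1 [|b2 s2']] //= _; rewrite /w /=.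
    * by rewrite WDl WZl.
    * by rewrite WDr WZr.
  + move=> s1 s2' s3' x.
    case: s1 => [|a1 s1]; case: s2' => [|b1 s2']; case: s3' => [|c1 s3'] //= _.
    by rewrite /w /= Wxx.
- move=> s /s2 ->; exact: zW.
- move=> s /s2 -> /=; rewrite /vp VE /pair11 /half_sigma_tt /theta1 /=; gcancel.
- move=> s /s2 -> /=; rewrite /vp VE /pair11 /half_sigma_tt /theta1 /= !DTE /hz.
  rewrite !(djDl, djNl) !djI (sigC (theta _`_1)); gcancel.
- move=> l s /s2 -> /=; rewrite /contract; exact: dAI0.
- move=> l s /s3 -> /=; rewrite /lieA /lieD.
  rewrite (_ : contract _ _ _ = 0); last exact: dAdA.
  rewrite dform3 /= /contract !dAI0 !act0; gcancel.
- exists eta; split; [exact: eta_kform|split; [|split; [|split]]].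
  + case=> [|X0 [|X1 [|X2 [|X3 [|X4 s]]]]] //= _.
    rewrite -(liftE X0) -(liftE X1) -(liftE X2) -(liftE X3) dNpull; exact: dAdA.
  + move=> s /s3 -> /=; rewrite /apull /eta /= Ulift //.
  + move=> s /s3 -> /=; rewrite /apull /eta /= Ulift zUP //.
  + move=> eta' _ _ Hap t /s3 ->.
    have := Hap [:: lift t`_0; lift t`_1; lift t`_2] erefl; rewrite /apull /= !liftE => ->.
    by [].
- by move=> l x; rewrite /vp VI.
Qed.

End Main.

Unset Implicit Arguments.

Theorem proposition3p2 (R : realFieldType) (C : comAlgType R)
  (TX GA GL Lh : lmodType C)
  (act : TX -> C -> C) (brX : TX -> TX -> TX)
  (brA : GA -> GA -> GA) (anc : GA -> TX)
  (iota : GL -> GA) (brL : GL -> GL -> GL) (nabL : GA -> GL -> GL)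
  (brH : Lh -> Lh -> Lh) (p : Lh -> GL) (z : C -> Lh) (nabH : GA -> Lh -> Lh)
  (theta : GA -> GL) (j : GL -> Lh) :
  setting act brX brA anc iota brL nabL brH p z nabH theta j ->
  let vp := varpi brA brL nabL brH nabH theta j in
  (* varpi is scalar valued *)
  exists w : seq GA -> C^o,
    is_kform 2 w
    /\ (forall s, size s = 2%N -> z (w s) = vp s)
    (* varpi = <dj, theta> + 1/2 sigma(theta,theta) *)
    /\ (forall s, size s = 2%N ->
          vp s = pair11 (dj nabL nabH j) (theta1 theta) s
                 + half_sigma_tt brL brH theta j s)
    (* varpi = <d^theta j, theta> - 1/2 sigma(theta,theta) *)
    /\ (forall s, size s = 2%N ->
          vp s = pair11 (dthj iota nabL nabH theta j) (theta1 theta) s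
                 - half_sigma_tt brL brH theta j s)
    (* d varpi is basic *)
    /\ (forall l s, size s = 2%N -> contract (iota l) (dA act brA anc w) s = 0)
    /\ (forall l s, size s = 3%N -> lieA act brA anc (iota l) (dA act brA anc w) s = 0)
    (* d varpi = a^* eta for a unique closed 3-form eta on N, and
       a^* eta = - <d^theta j, F^theta> *)
    /\ (exists eta : seq TX -> C^o,
          is_kform 3 eta
          /\ (forall s, size s = 4%N -> dN act brX eta s = 0)
          /\ (forall s, size s = 3%N -> apull anc eta s = dA act brA anc w s)
          /\ (forall s, size s = 3%N ->
                z (apull anc eta s)
                = - pair12 (dthj iota nabL nabH theta j) (Ftheta brA brL nabL theta) s)
          /\ (forall eta' : seq TX -> C^o,
                is_kform 3 eta'
                -> (forall s, size s = 4%N -> dN act brX eta' s = 0)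
                -> (forall s, size s = 3%N -> apull anc eta' s = dA act brA anc w s)
                -> forall t, size t = 3%N -> eta' t = eta t))
    (* iota_xi varpi = - <dj, xi> for xi in Gamma(L) *)
    /\ (forall (l : GL) (x : GA), vp [:: iota l; x] = - dj nabL nabH j x l).
Proof.
move=> Hs.
case: Hs => [HX [HA [Hanc [Hsurj [Hancbr [Hiota [Hinj [Hker [HbrL [HnabL [HH [HbrHZ [Hp [Hpsurj [Hpbr [Hz [Hzinj [Hpker [Hzc [Hrep [Hder [HpnabH [HnabHz [HnabHL [Hth [Hthi [Hj Hpj]]]]]]]]]]]]]]]]]]]]]]]]]]].
eapply main; eassumption.
Qed.
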